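(* Let $D$ be a division semialgebra over $\mathbb{Z}_\mathrm{max}$ with finite unit index. Then the group $G=D^\times/\mathbb{Z}_\mathrm{max}^\times$ is cyclic.
   Context: A (possibly noncommutative) semiring has a commutative associative addition with identity $0$ and an associative multiplication with identity $1$, satisfying both distributive laws; a division semiring is one in which every nonzero element is invertible. $\mathbb{Z}_\mathrm{max}=\mathbb{Z}\cup\{-\infty\}$ is the semifield with addition $\max$ and multiplication ordinary addition. A division semialgebra over a semifield $K$ is a division semiring $D$ with an injective homomorphism from $K$ into the center of $D$. The unit index is $\mathrm{ui}(D/K)=|D^\times/K^\times|$. *)

(* Defs.v *)
From HB Require Import structures.
From mathcomp Require Import all_boot all_order all_algebra.
Set Implicit Arguments. Unset Strict Implicit. Unset Printing Implicit Defensive.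
Import Order.TTheory GRing.Theory Num.Theory.

(* The semifield Z_max = Z ∪ {-oo}: None stands for -oo, Some n for n : int. *)
Definition zmax := option int.
Definition zmax_neginf : zmax := None.
Definition zmax_one : zmax := Some 0%R.

Definition zmax_add (a b : zmax) : zmax :=
  match a, b with
  | None, _ => b
  | _, None => a
  | Some x, Some y => Some (Order.max x y)
  end.

Definition zmax_mul (a b : zmax) : zmax :=
  match a, b with
  | Some x, Some y => Some (x + y)%R
  | _, _ => None
  end.

Local Open Scope ring_scope.

Definition division_semiring (D : pzSemiRingType) : Prop :=
  forall x : D, x != 0 -> exists y : D, x * y = 1 /\ y * x = 1.

(* phi : Z_max -> D is an injective semiring homomorphism into the center of D,
   i.e. D is a division semialgebra over Z_max via phi. *)
Definition zmax_central_embedding (D : pzSemiRingType) (phi : zmax -> D) : Prop :=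
  injective phi /\
  [/\ phi zmax_neginf = 0,
      phi zmax_one = 1,
      (forall a b, phi (zmax_add a b) = phi a + phi b),
      (forall a b, phi (zmax_mul a b) = phi a * phi b)
    & (forall a (d : D), phi a * d = d * phi a)].

(* The units of D (= nonzero elements in a division semiring) are
   D^x; the units of Z_max are the Some n, with image phi (Some n).
   Finite unit index: D^x / Z_max^x has finitely many cosets, i.e. there is a
   finite list of units whose cosets cover D^x. *)
Definition finite_unit_index (D : pzSemiRingType) (phi : zmax -> D) : Prop :=
  exists s : seq D, all (fun u => u != 0) s /\
    forall u : D, u != 0 -> exists2 v, v \in s & exists n : int, u = v * phi (Some n).

(* The quotient group D^x / Z_max^x is cyclic: it is generated by the class of
   one unit g (nonnegative powers suffice, the group being finite). *)
Definition unit_quotient_cyclic (D : pzSemiRingType) (phi : zmax -> D) : Prop :=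
  exists2 g : D, g != 0 &
    forall u : D, u != 0 -> exists (k : nat) (n : int), u = g ^+ k * phi (Some n).

(* Main.v *)
Require Import Defs.
From mathcomp Require Import all_boot all_order all_algebra.
From mathcomp Require Import zify.
From Stdlib Require Import Classical ClassicalEpsilon.
Import Order.TTheory GRing.Theory Num.Theory.
Set Implicit Arguments. Unset Strict Implicit. Unset Printing Implicit Defensive.
Local Open Scope ring_scope.

Definition dle (D : pzSemiRingType) (x y : D) : Prop := x + y = y.

Lemma dle_trans (D : pzSemiRingType) (x y z : D) : dle x y -> dle y z -> dle x z.
Proof. rewrite /dle => h1 h2; by rewrite -h2 addrA h1. Qed.

Lemma dle_anti (D : pzSemiRingType) (x y : D) : dle x y -> dle y x -> x = y.
Proof. rewrite /dle => h1 h2; by rewrite -h2 addrC h1. Qed.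

Lemma dle_mull (D : pzSemiRingType) (z x y : D) : dle x y -> dle (z * x) (z * y).
Proof. rewrite /dle => h; by rewrite -mulrDr h. Qed.

Lemma dle_mulr (D : pzSemiRingType) (z x y : D) : dle x y -> dle (x * z) (y * z).
Proof. rewrite /dle => h; by rewrite -mulrDl h. Qed.

Definition T (D : pzSemiRingType) (phi : zmax -> D) (k : int) : D := phi (Some k).

Lemma T_mul (D : pzSemiRingType) (phi : zmax -> D) : zmax_central_embedding phi ->
  forall a b, T phi a * T phi b = T phi (a + b).
Proof. move=> [_ [_ _ _ hm _]] a b; by rewrite /T -hm. Qed.

Lemma T0 (D : pzSemiRingType) (phi : zmax -> D) : zmax_central_embedding phi ->
  T phi 0 = 1.
Proof. by move=> [_ [_ h1 _ _ _]]. Qed.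

Lemma T_comm (D : pzSemiRingType) (phi : zmax -> D) : zmax_central_embedding phi ->
  forall a d, T phi a * d = d * T phi a.
Proof. move=> [_ [_ _ _ _ hc]] a d; exact: hc. Qed.

Lemma T_le (D : pzSemiRingType) (phi : zmax -> D) : zmax_central_embedding phi ->
  forall a b, dle (T phi a) (T phi b) <-> (a <= b).
Proof.
move=> [hi [_ _ ha _ _]] a b; rewrite /dle /T -ha /=; split.
  by move=> /hi [] /max_idPr.
by move=> /max_idPr ->.
Qed.

Lemma T_neq0 (D : pzSemiRingType) (phi : zmax -> D) : zmax_central_embedding phi ->
  forall a, T phi a != 0.
Proof. move=> [hi [h0 _ _ _ _]] a; apply/eqP; rewrite /T -h0 => /hi. by []. Qed.

Lemma one_neq0 (D : pzSemiRingType) (phi : zmax -> D) : zmax_central_embedding phi ->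
  (1 : D) != 0.
Proof. move=> H; rewrite -(T0 H); exact: T_neq0. Qed.

Lemma T_inj (D : pzSemiRingType) (phi : zmax -> D) : zmax_central_embedding phi ->
  forall a b, T phi a = T phi b -> a = b.
Proof. by move=> [hi _] a b /hi []. Qed.

Lemma dle_refl (D : pzSemiRingType) (phi : zmax -> D) : zmax_central_embedding phi ->
  forall x : D, dle x x.
Proof.
move=> H x; have h11 : (1 : D) + 1 = 1.
  by rewrite -(T0 H); apply/(T_le H).
by rewrite /dle -{1 2 3}(mulr1 x) -mulrDr h11.
Qed.

Lemma T_exp (D : pzSemiRingType) (phi : zmax -> D) : zmax_central_embedding phi ->
  forall a (k : nat), T phi a ^+ k = T phi (a * k%:Z).
Proof.
move=> H a; elim=> [|k IH]; first by rewrite expr0 mulr0 (T0 H).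
rewrite exprS IH (T_mul H); congr T; lia.
Qed.

Lemma cancel_l (D : pzSemiRingType) (v x y : D) : division_semiring D ->
  v != 0 -> v * x = v * y -> x = y.
Proof.
move=> Hd /Hd [w [_ hw]] e.
by rewrite -(mul1r x) -(mul1r y) -hw -!mulrA e.
Qed.

Lemma cancel_r (D : pzSemiRingType) (v x y : D) : division_semiring D ->
  v != 0 -> x * v = y * v -> x = y.
Proof.
move=> Hd /Hd [w [hw _]] e.
by rewrite -(mulr1 x) -(mulr1 y) -hw !mulrA e.
Qed.

Lemma mul_neq0 (D : pzSemiRingType) (phi : zmax -> D) : zmax_central_embedding phi ->
  division_semiring D -> forall x y : D, x != 0 -> y != 0 -> x * y != 0.
Proof.
move=> H Hd x y hx hy; apply/eqP => e.
have [w [hw _]] := Hd _ hy.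
have [w' [hw' _]] := Hd _ hx.
move: (one_neq0 H); rewrite -hw' -{1}(mulr1 x) -hw mulrA e !mul0r.
by rewrite eqxx.
Qed.

Lemma exp_neq0 (D : pzSemiRingType) (phi : zmax -> D) : zmax_central_embedding phi ->
  division_semiring D -> forall (x : D) k, x != 0 -> x ^+ k != 0.
Proof.
move=> H Hd x k hx; elim: k => [|k IH]; first by rewrite expr0 (one_neq0 H).
by rewrite exprS (mul_neq0 H).
Qed.

Lemma pigeon (D : pzSemiRingType) (phi : zmax -> D) : zmax_central_embedding phi ->
  division_semiring D -> finite_unit_index phi ->
  forall x : D, x != 0 -> exists m n, (0 < m)%N /\ x ^+ m = T phi n.
Proof.
move=> H Hd [s [_ hs]] x hx.
have ex i : exists v, v \in s /\ exists n : int, x ^+ i = v * phi (Some n).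
  have [v hv [n hn]] := hs _ (exp_neq0 H Hd i hx).
  by exists v; split => //; exists n.
pose f i := proj1_sig (constructive_indefinite_description _ (ex i)).
have hf i : f i \in s /\ exists n : int, x ^+ i = f i * phi (Some n).
  exact: (proj2_sig (constructive_indefinite_description _ (ex i))).
pose l := map f (iota 0 (size s).+1).
have nu : ~~ uniq l.
  apply/negP => u.
  have sub : {subset l <= s}.
    by move=> y /mapP [i _ ->]; case: (hf i).
  by have := uniq_leq_size u sub; rewrite size_map size_iota ltnn.
have [i [j [lij jl e]]] := uniqPn 0 nu.
move: jl e; rewrite size_map size_iota => jl.
rewrite !(nth_map 0%N) ?size_iota ?(ltn_trans lij) // !nth_iota ?(ltn_trans lij) // !add0n => e.
have [_ [a ha]] := hf i; have [_ [b hb]] := hf j.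
exists (j - i)%N, (b - a); split; first by rewrite subn_gt0.
apply: (cancel_l Hd (exp_neq0 H Hd i hx)).
rewrite -exprD subnKC ?(ltnW lij) // hb -e.
rewrite ha -mulrA -/(T phi a) (T_mul H).
by rewrite /T addrC subrK.
Qed.

Lemma compar (D : pzSemiRingType) (phi : zmax -> D) : zmax_central_embedding phi ->
  division_semiring D -> forall (x : D) m n, (0 < m)%N -> x ^+ m = T phi n ->
  (0 <= n -> dle 1 x) /\ (n <= 0 -> dle x 1).
Proof.
move=> H Hd x [//|m'] n _ hxm.
pose S := \sum_(i < m') x ^+ i.+1.
pose y := \sum_(i < m'.+1) x ^+ i.
have hy : y = 1 + S.
  by rewrite /y big_ord_recl expr0 /S; congr (_ + _); apply: eq_bigr => i _.
have hxy : x * y = S + T phi n.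
  rewrite /y mulr_sumr big_ord_recr /= -exprS hxm /S; congr (_ + _).
  by apply: eq_bigr => i _; rewrite -exprS.
have hSS : S + S = S by exact: (dle_refl H).
have y0 : y != 0.
  apply/eqP => e; move: (one_neq0 H); rewrite -[1 : D]addr0 -e hy addrA.
  by rewrite [1 + 1](dle_refl H) -hy e eqxx.
have [w [yw _]] := Hd _ y0.
split => hn.
  have h1 : dle 1 (T phi n) by rewrite -(T0 H); apply/(T_le H).
  have : dle y (x * y).
    rewrite /dle hxy hy [S + _]addrC addrACA h1 hSS addrC //.
  by move=> /(dle_mulr w); rewrite -mulrA yw mulr1.
have h1 : dle (T phi n) 1 by rewrite -(T0 H); apply/(T_le H).
have : dle (x * y) y.
  rewrite /dle hxy hy [S + _]addrC addrACA h1 hSS //.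
by move=> /(dle_mulr w); rewrite -mulrA yw mulr1.
Qed.

Lemma total (D : pzSemiRingType) (phi : zmax -> D) : zmax_central_embedding phi ->
  division_semiring D -> finite_unit_index phi ->
  forall a b : D, a != 0 -> b != 0 -> dle a b \/ dle b a.
Proof.
move=> H Hd Hf a b ha hb.
have [w [bw wb]] := Hd _ hb.
have w0 : w != 0.
  by apply/eqP => e; move: (one_neq0 H); rewrite -bw e mulr0 eqxx.
have [m [n [hm hx]]] := pigeon H Hd Hf (mul_neq0 H Hd ha w0).
have [c1 c2] := compar H Hd hm hx.
have hab : a * w * b = a by rewrite -mulrA wb mulr1.
case/orP: (le_total 0 n) => hn.
  right; have := dle_mulr b (c1 hn); by rewrite mul1r hab.
left; have := dle_mulr b (c2 hn); by rewrite mul1r hab.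
Qed.

Lemma pow_up (D : pzSemiRingType) (phi : zmax -> D) : zmax_central_embedding phi ->
  forall u : D, dle 1 u -> forall k, dle u (u ^+ k.+1).
Proof.
move=> H u hu; elim=> [|k IH]; first by rewrite expr1; exact: (dle_refl H).
apply: (dle_trans IH); have := dle_mull (u ^+ k.+1) hu.
by rewrite mulr1 -exprSr.
Qed.

Lemma pow_down (D : pzSemiRingType) (phi : zmax -> D) : zmax_central_embedding phi ->
  forall u : D, dle u 1 -> forall k, dle (u ^+ k.+1) u.
Proof.
move=> H u hu; elim=> [|k IH]; first by rewrite expr1; exact: (dle_refl H).
apply: (dle_trans _ IH); have := dle_mull (u ^+ k.+1) hu.
by rewrite mulr1 -exprSr.
Qed.

Lemma archi (D : pzSemiRingType) (phi : zmax -> D) : zmax_central_embedding phi ->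
  division_semiring D -> finite_unit_index phi ->
  forall u : D, u != 0 -> exists N : nat,
    dle (T phi (- N%:Z)) u /\ dle u (T phi N%:Z).
Proof.
move=> H Hd Hf u hu.
have [[|m] [n [//= _ hx]]] := pigeon H Hd Hf hu.
exists `|n|%N.
have [h|h] := total H Hd Hf hu (one_neq0 H).
  have := pow_down H h m; rewrite hx => h2; split.
    by apply: (dle_trans _ h2); apply/(T_le H); lia.
  by apply: (dle_trans h); rewrite -(T0 H); apply/(T_le H); lia.
have := pow_up H h m; rewrite hx => h2; split.
  by apply: (dle_trans _ h); rewrite -(T0 H); apply/(T_le H); lia.
by apply: (dle_trans h2); apply/(T_le H); lia.
Qed.

Lemma nat_search (Q : nat -> Prop) N : Q 0%N -> ~ Q N -> exists j, Q j /\ ~ Q j.+1.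
Proof.
elim: N => [//|N IH] h0 hN.
case: (classic (Q N)) => hQ; first by exists N.
exact: IH.
Qed.

Lemma min_ex (D : pzSemiRingType) (phi : zmax -> D) : zmax_central_embedding phi ->
  forall (l : seq D) (P : D -> Prop),
  (forall x, P x -> exists2 v, v \in l & exists n, x = v * T phi n) ->
  (forall x y v a b, P x -> P y -> x = v * T phi a -> y = v * T phi b -> x = y) ->
  (forall x y, P x -> P y -> dle x y \/ dle y x) ->
  (exists x, P x) -> exists x, P x /\ forall y, P y -> dle x y.
Proof.
move=> H; elim=> [|v l IH] P hcl hun htot hne.
  by case: hne => x /hcl [v].
pose C y := exists n, y = v * T phi n.
case: (classic (exists x, P x /\ C x)) => [[x0 [Px0 Cx0]]|hno].
  case: (classic (exists y, P y /\ ~ C y)) => [hne'|hno'].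
    have [m' [[Pm nCm] hm']] : exists x, (P x /\ ~ C x) /\
        forall y, P y /\ ~ C y -> dle x y.
      apply: IH.
    - move=> x [Px nCx]; have [v' hv' hc] := hcl x Px.
      move: hv'; rewrite in_cons => /orP [/eqP e|hv']; last by exists v'.
      by subst v'.
    - by move=> x y v' a b [Px _] [Py _]; exact: hun.
    - by move=> x y [Px _] [Py _]; exact: htot.
    - exact: hne'.
    have cls y : P y -> C y \/ dle m' y.
      move=> Py; case: (classic (C y)) => hC; [by left | by right; apply: hm'].
    have eqx y : P y -> C y -> y = x0.
      move=> Py [b hb]; case: Cx0 => a ha; exact: (hun _ _ v b a).
    case: (htot _ _ Px0 Pm) => hle.
      exists x0; split => // y Py; case: (cls y Py) => [hC|hy].
        by rewrite (eqx y Py hC); exact: (dle_refl H).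
      exact: dle_trans hle hy.
    exists m'; split => // y Py; case: (cls y Py) => [hC|hy] //.
    by rewrite (eqx y Py hC).
  exists x0; split => // y Py.
  have hC : C y by apply: NNPP => hC; apply: hno'; exists y.
  case: hC => b hb; case: Cx0 => a ha.
  by rewrite (hun _ _ v a b Px0 Py ha hb); exact: (dle_refl H).
apply: IH => //.
move=> x Px; have [v' hv' hc] := hcl x Px.
move: hv'; rewrite in_cons => /orP [/eqP e|hv']; last by exists v'.
by subst v'; exfalso; apply: hno; exists x.
Qed.

Lemma pow_inv (D : pzSemiRingType) (a b : D) : a * b = 1 -> forall j, a ^+ j * b ^+ j = 1.
Proof.
move=> hab; elim=> [|j IH]; first by rewrite !expr0 mulr1.
by rewrite exprSr exprS mulrA -(mulrA _ a) hab mulr1.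
Qed.

Theorem mainTheorem17 (D : pzSemiRingType) (phi : zmax -> D) :
  division_semiring D ->
  zmax_central_embedding phi ->
  finite_unit_index phi ->
  unit_quotient_cyclic phi.
Proof.
move=> Hd H Hf.
have [s [_ hs]] := Hf.
pose t := T phi 1.
pose P x := dle 1 x /\ x != 1 /\ dle x t.
have P0 x : P x -> x != 0.
  move=> [h1 _]; apply/eqP => e; move: h1; rewrite e /dle addr0 => e1.
  by move: (one_neq0 H); rewrite e1 eqxx.
have Puniq x k : P x -> P (x * T phi k) -> ~ (0 < k).
  move=> [hx1 [hxn hxt]] [hy1 [hyn hyt]] hk.
  have h1 : dle (T phi k) (x * T phi k).
    by have := dle_mulr (T phi k) hx1; rewrite mul1r.
  have hk1 : k <= 1 by apply/(T_le H); exact: dle_trans h1 hyt.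
  have ek : k = 1 by lia.
  subst k; have e : x * t = t by apply: dle_anti.
  move: hxn; rewrite -[x]mulr1 -(T0 H) -[0 : int](subrr 1) -(T_mul H) mulrA.
  by rewrite -/t e (T_mul H) subrr (T0 H) eqxx.
have [g [[g1 [gn gt]] gmin]] : exists g, P g /\ forall y, P y -> dle g y.
  apply: (min_ex H (l := s)).
  - by move=> x /P0 /hs.
  - move=> x y v a b Px Py hx hy.
    have ey : y = x * T phi (b - a).
      by rewrite hy hx -mulrA (T_mul H) addrC subrK.
    case: (ltgtP 0 (b - a)) => hba.
    + by exfalso; apply: (Puniq x (b - a)) => //; rewrite -ey.
    + exfalso; apply: (Puniq y (- (b - a))) => //; last by rewrite oppr_gt0.
      by rewrite ey -mulrA (T_mul H) subrr (T0 H) mulr1.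
    + by rewrite ey -hba (T0 H) mulr1.
  - move=> x y Px Py; exact: (total H Hd Hf (P0 x Px) (P0 y Py)).
  - exists t; split; first by rewrite -(T0 H); apply/(T_le H).
    split; last exact: (dle_refl H).
    by rewrite -(T0 H); apply/eqP => /(T_inj H).
have g0 : g != 0 by apply: P0.
exists g => // u hu.
have [N [hN1 hN2]] := archi H Hd Hf hu.
pose u' := u * T phi N%:Z.
have u1 : dle 1 u'.
  by have := dle_mulr (T phi N%:Z) hN1; rewrite (T_mul H) addNr (T0 H).
have u2 : dle u' (T phi (N%:Z + N%:Z)).
  by have := dle_mulr (T phi N%:Z) hN2; rewrite (T_mul H).
have [m' [n' [hm' hg]]] := pigeon H Hd Hf g0.
have hn' : 0 < n'.
  rewrite ltNge; apply/negP => hn.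
  have := (compar H Hd hm' hg).2 hn => hg1.
  by move: gn; rewrite (dle_anti hg1 g1) eqxx.
pose M := (m' * (N + N).+1)%N.
have nQM : ~ dle (g ^+ M) u'.
  rewrite /M exprM hg (T_exp H) => h.
  have := dle_trans h u2; move/(T_le H); nia.
have Q0 : dle (g ^+ 0) u' by rewrite expr0.
have [j [Qj nQj]] := nat_search (Q := fun j => dle (g ^+ j) u') Q0 nQM.
have [gi [ggi gig]] := Hd _ g0.
pose w := gi ^+ j * u'.
have hu' : u' = g ^+ j * w by rewrite /w mulrA (pow_inv ggi) mul1r.
have w1 : dle 1 w by have := dle_mull (gi ^+ j) Qj; rewrite (pow_inv gig).
have nwg : ~ dle g w.
  by move=> h; apply: nQj; have := dle_mull (g ^+ j) h; rewrite -hu' -exprSr.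
have w0 : w != 0.
  apply/eqP => e; move: w1; rewrite e /dle addr0 => e1.
  by move: (one_neq0 H); rewrite e1 eqxx.
have wg : dle w g.
  by case: (total H Hd Hf w0 g0) => // h; exfalso; apply: nwg.
have ew : w = 1.
  apply/eqP; apply: NNPP => hw; apply: nwg; apply: gmin.
  split => //; split; first exact/negP.
  exact: dle_trans wg gt.
exists j, (- N%:Z).
rewrite -/(T phi _) -[u](mulr1) -(T0 H) -(addrN N%:Z) -(T_mul H) mulrA -/u'.
by rewrite hu' ew mulr1.
Qed.
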